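(* Let $h_1,h_2\in\mathbb{C}\setminus\{0\}$ with $|h_1|>|h_2|$, deadlines $D_1<D_2$, minimum blocklength $\hat m>0$, power budget $P_{\max}>0$, packet sizes $N_1,N_2>0$ and error probabilities $\epsilon_1,\epsilon_2\in(0,1)$. For $k=1,2$ define, for $m>0,\gamma>0$, $$F_k(m,\gamma)=\sqrt{\frac{1}{m}\left(1-\frac{1}{(\gamma+1)^2}\right)}\,\frac{Q^{-1}(\epsilon_k)}{\ln 2}-\log_2(1+\gamma)+\frac{N_k}{m},$$ and let $\Gamma_k(m)$ denote the implicit function defined by $F_k(m,\Gamma_k(m))=0$, $\Gamma_k(m)>0$. Consider the problem $$\min_{\{m_k,p_k,\gamma_k\}_{k=1,2}} m_1p_1+m_2p_2$$ subject to $F_k(m_k,\gamma_k)=0$, $\hat m\le m_k$, $p_k\ge0$ for $k=1,2$, $p_1+p_2\le P_{\max}$, $m_1\le D_1$, $m_2\le m_1$, $\gamma_1=p_1|h_1|^2$, $\gamma_2=\frac{p_2|h_2|^2}{p_1|h_2|^2+1}$. If $\frac{Q^{-1}(\epsilon_k)}{\sqrt{N_k}}\le \frac{2\sqrt{\ln 2}}{4-\sqrt2}=0.64394\ldots$ for $k=1,2$ and the problem is feasible, then an optimal solution is $$m_1^*=m_2^*=D_1,\quad \gamma_k^*=\Gamma_k(D_1)\ (k=1,2),\quad p_1^*=\frac{\gamma_1^*}{|h_1|^2},\quad p_2^*=\frac{\gamma_1^*\gamma_2^*}{|h_1|^2}+\frac{\gamma_2^*}{|h_2|^2}.$$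
   Context: $Q^{-1}$ is the inverse of the Gaussian Q-function. The setting is a two-user single-antenna downlink with superposition coding and unit noise variances, where receiver 2's blocklength is forced to be at most receiver 1's so that receiver 1 can perform successive interference cancellation, while receiver 2 treats receiver 1's signal as noise. Blocklengths $m_k$ are treated as continuous variables. The constraint $F_k(m_k,\gamma_k)=0$ is the finite-blocklength rate relation $\frac{N_k}{m_k}=\log_2(1+\gamma_k)-\sqrt{\frac{1}{m_k}\big(1-\frac{1}{(1+\gamma_k)^2}\big)}\frac{Q^{-1}(\epsilon_k)}{\ln2}$. *)

(* Defs.v *)
From Stdlib Require Import Reals Lra ClassicalEpsilon.
From Coquelicot Require Import Coquelicot.
Open Scope R_scope.

Definition Qfun (x : R) : R :=
  / sqrt (2 * PI) *
  RInt_gen (fun t => exp (- (t ^ 2) / 2)) (at_point x) (Rbar_locally p_infty).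

(* Inverse Q-function: the (unique, since Q is a strictly decreasing
   bijection R -> (0,1)) x with Q x = eps. *)
Definition Qinv (eps : R) : R :=
  epsilon (inhabits 0) (fun x => Qfun x = eps).

Definition log2 (x : R) : R := ln x / ln 2.

Definition Ffun (eps N m g : R) : R :=
  sqrt ((1 / m) * (1 - 1 / (g + 1) ^ 2)) * (Qinv eps / ln 2)
  - log2 (1 + g) + N / m.

Definition Gamma (eps N m : R) : R :=
  epsilon (inhabits 0) (fun g => 0 < g /\ Ffun eps N m g = 0).

(* Feasible set of the optimization problem (blocklengths are real). *)
Definition feasible (h1 h2 : C) (mhat Pmax D1 N1 N2 eps1 eps2 : R)
    (m1 m2 p1 p2 g1 g2 : R) : Prop :=
  Ffun eps1 N1 m1 g1 = 0 /\ Ffun eps2 N2 m2 g2 = 0 /\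
  mhat <= m1 /\ mhat <= m2 /\ 0 <= p1 /\ 0 <= p2 /\
  p1 + p2 <= Pmax /\ m1 <= D1 /\ m2 <= m1 /\
  g1 = p1 * Cmod h1 ^ 2 /\
  g2 = p2 * Cmod h2 ^ 2 / (p1 * Cmod h2 ^ 2 + 1).

(* Main.v *)
Require Import Defs.
From Stdlib Require Import Reals Lra Psatz ClassicalEpsilon.
From Coquelicot Require Import Coquelicot.
Open Scope R_scope.

Lemma mono_from (f df : R -> R) (a : R) :
  (forall x, a <= x -> is_derive f x (df x)) ->
  (forall x, a <= x -> 0 <= df x) ->
  forall y, a <= y -> f a <= f y.
Proof.
  intros Hd Hp y Hy.
  destruct (Req_dec a y) as [->|Hne]; [lra|].
  assert (Hlt : a < y) by lra.
  destruct (MVT_gen f a y df) as [c [Hc Heq]].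
  - intros x Hx. rewrite Rmin_left in Hx by lra. rewrite Rmax_right in Hx by lra.
    apply Hd; lra.
  - intros x Hx. rewrite Rmin_left in Hx by lra. rewrite Rmax_right in Hx by lra.
    apply continuity_pt_filterlim.
    apply (ex_derive_continuous (K:=R_AbsRing) (V:=R_NormedModule)).
    exists (df x). apply Hd; lra.
  - rewrite Rmin_left in Hc by lra. rewrite Rmax_right in Hc by lra.
    assert (0 <= df c * (y - a)) by (apply Rmult_le_pos; [apply Hp; lra| lra]).
    lra.
Qed.

Lemma E1 s : 1 - s <= exp (- s).
Proof. generalize (exp_ineq1_le (-s)); lra. Qed.

Lemma E2 s : 0 <= s -> exp (- s) <= 1 - s + s^2/2.
Proof.
  intros Hs.
  assert (H := mono_from (fun x => 1 - x + x^2/2 - exp (-x)) (fun x => -1 + x + exp (-x)) 0).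
  simpl in H. rewrite Ropp_0, exp_0 in H.
  assert (H' : 1 - 0 + 0 * (0*1) / 2 - 1 <= 1 - s + s * (s * 1) / 2 - exp (- s)).
  { apply H; auto.
    - intros x _. auto_derive; auto; field.
    - intros x _. generalize (E1 x); lra. }
  simpl. lra.
Qed.

Lemma E3 s : 0 <= s -> 1 - s + s^2/2 - s^3/6 <= exp (- s).
Proof.
  intros Hs.
  assert (H := mono_from (fun x => exp (-x) - (1 - x + x^2/2 - x^3/6)) (fun x => - exp (-x) + (1 - x + x^2/2)) 0).
  simpl in H. rewrite Ropp_0, exp_0 in H.
  assert (H' : 1 - (1 - 0 + 0 * (0*1) / 2 - 0*(0*(0*1))/6) <= exp (-s) - (1 - s + s * (s * 1) / 2 - s*(s*(s*1))/6)).
  { apply H; auto.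
    - intros x _. auto_derive; auto; field.
    - intros x Hx. generalize (E2 x Hx); simpl; lra. }
  simpl. lra.
Qed.

Lemma E4 s : 0 <= s -> exp s * (2 - s) <= 2 + s.
Proof.
  intros Hs.
  assert (H := mono_from (fun x => (2 + x) * exp (-x) - (2 - x)) (fun x => 1 - (1 + x) * exp (-x)) 0).
  simpl in H. rewrite Ropp_0, exp_0 in H.
  assert (H' : (2 + 0) * 1 - (2 - 0) <= (2 + s) * exp (-s) - (2 - s)).
  { apply H; auto.
    - intros x _. auto_derive; auto; field.
    - intros x Hx. generalize (exp_ineq1_le x). intro H1.
      assert (exp x * exp (-x) = 1) by (rewrite <- exp_plus; replace (x + - x) with 0 by ring; apply exp_0).
      assert (0 < exp (-x)) by apply exp_pos. nra. }
  assert (exp s * exp (-s) = 1) by (rewrite <- exp_plus; replace (s + - s) with 0 by ring; apply exp_0).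
  assert (0 < exp s) by apply exp_pos. nra.
Qed.

Lemma E5 a b : 0 < a -> a <= b -> (1 - exp (-2*b)) / b <= (1 - exp (-2*a)) / a.
Proof.
  intros Ha Hab.
  assert (H := mono_from (fun x => - ((1 - exp (-2*x)) / x))
     (fun x => (1 - exp (-2*x) - 2*x*exp(-2*x)) / x^2) a).
  simpl in H.
  assert (H' : - ((1 - exp (-2*a)) / a) <= - ((1 - exp (-2*b)) / b)).
  { apply H; auto.
    - intros x Hx. auto_derive. lra. field. lra.
    - intros x Hx. apply Rmult_le_pos; [|apply Rlt_le, Rinv_0_lt_compat; nra].
      generalize (exp_ineq1_le (2*x)). intro H1.
      assert (exp (2*x) * exp (-2*x) = 1) by (rewrite <- exp_plus; replace (2*x + -2* x) with 0 by ring; apply exp_0).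
      assert (0 < exp (-2*x)) by apply exp_pos. nra. }
  lra.
Qed.

Lemma expinv s : exp s * exp (-s) = 1.
Proof. rewrite <- exp_plus; replace (s + - s) with 0 by ring; apply exp_0. Qed.

Lemma Jlem s : 0 <= s ->
  37/20 * (2*(exp s^2 - 1) - s*(exp s^2 + exp s + 2)) <= 4*exp s*(s*exp s - exp s + 1).
Proof.
  intros Hs.
  set (y := exp s). set (z := exp (-s)).
  assert (Hyz : y * z = 1) by apply expinv.
  assert (Hy : 0 < y) by apply exp_pos.
  assert (Hz : 0 < z) by apply exp_pos.
  set (K := 37/20).
  assert (Hj : 0 <= (4+K)*s - 4 - 2*K + z*(4+K*s) + 2*K*(1+s)*z^2).
  { destruct (Rle_lt_dec (3/2) s) as [Hb|Hb].
    - unfold K. assert (0 <= z*(4+37/20*s)) by nra. assert (0 <= 2*(37/20)*(1+s)*z^2) by nra. nra.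
    - set (L := 1 - s + s^2/2 - s^3/6).
      assert (HL : L <= z) by (apply E3; auto).
      assert (HL0 : 0 <= L).
      { unfold L. nra. }
      assert (Hq : 0 <= 3/20 + 109/40*s - 37/12*s^2 + 37/24*s^3 - 37/72*s^4 + 37/360*s^5) by nra.
      assert (Hp : (4+K)*s - 4 - 2*K + L*(4+K*s) + 2*K*(1+s)*L^2
                   = s^2 * (3/20 + 109/40*s - 37/12*s^2 + 37/24*s^3 - 37/72*s^4 + 37/360*s^5)).
      { unfold L, K. field. }
      assert (0 <= s^2 * (3/20 + 109/40*s - 37/12*s^2 + 37/24*s^3 - 37/72*s^4 + 37/360*s^5)) by
        (apply Rmult_le_pos; nra).
      assert (L*(4+K*s) <= z*(4+K*s)) by (apply Rmult_le_compat_r; unfold K; lra).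
      assert (L^2 <= z^2) by nra.
      assert (2*K*(1+s)*L^2 <= 2*K*(1+s)*z^2) by (apply Rmult_le_compat_l; unfold K; nra).
      lra. }
  assert (Heq : 4*y*(s*y - y + 1) - K * (2*(y^2 - 1) - s*(y^2 + y + 2))
     = y^2 * ((4+K)*s - 4 - 2*K + z*(4+K*s) + 2*K*(1+s)*z^2)).
  { replace (y^2 * ((4+K)*s - 4 - 2*K + z*(4+K*s) + 2*K*(1+s)*z^2)) with
      (y^2 * ((4+K)*s - 4 - 2*K) + y*(y*z)*(4+K*s) + 2*K*(1+s)*(y*z)^2) by ring.
    rewrite Hyz. unfold K. ring. }
  assert (0 <= y^2 * ((4+K)*s - 4 - 2*K + z*(4+K*s) + 2*K*(1+s)*z^2)) by (apply Rmult_le_pos; nra).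
  unfold K in *. lra.
Qed.

Definition kf s := (1 - exp (-s)) * sqrt (exp s + 1).
Definition kd s := exp (-s) * sqrt (exp s + 1) + (1 - exp (-s)) * (exp s / (2 * sqrt (exp s + 1))).
Definition Pf s := kf s / s.
Definition Pd s := (kd s * s - kf s * 1) / s^2.
Definition pf s := (exp s - 1) / s.
Definition pd s := (exp s * s - (exp s - 1) * 1) / s^2.
Definition Gf r s := r^2 * Pf s ^ 2 + 4 * ln 2 * pf s.
Definition Qf r s := r * Pf s + sqrt (Gf r s).

Lemma kf_der s : is_derive kf s (kd s).
Proof.
  unfold kf, kd. assert (0 < exp s) by apply exp_pos.
  auto_derive.
  - lra.
  - assert (0 < sqrt (exp s + 1)) by (apply sqrt_lt_R0; lra). field. lra.
Qed.

Lemma id_der s : is_derive (fun x : R => x) s 1.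
Proof. auto_derive; auto. Qed.

Lemma Pf_der s : s <> 0 -> is_derive Pf s (Pd s).
Proof.
  intros Hs. unfold Pf, Pd. apply (is_derive_div kf (fun x => x)); auto.
  apply kf_der. apply id_der.
Qed.

Lemma pf_der s : s <> 0 -> is_derive pf s (pd s).
Proof.
  intros Hs. unfold pf, pd. apply (is_derive_div (fun x => exp x - 1) (fun x => x)); auto.
  auto_derive; auto; ring. apply id_der.
Qed.

Lemma exp_gt1 s : 0 < s -> 1 + s < exp s.
Proof. intros; apply exp_ineq1; lra. Qed.

Lemma pf_pos s : 0 < s -> 0 < pf s.
Proof.
  intros Hs. unfold pf. apply Rdiv_lt_0_compat; auto. generalize (exp_gt1 s Hs); lra.
Qed.

Lemma Gf_pos r s : 0 < s -> 0 < Gf r s.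
Proof.
  intros Hs. unfold Gf. generalize (pf_pos s Hs). intro.
  assert (0 < ln 2) by (rewrite <- ln_1; apply ln_increasing; lra).
  assert (0 <= r^2 * Pf s ^ 2) by (apply Rmult_le_pos; apply pow2_ge_0).
  nra.
Qed.

Definition Qd r s := r * Pd s + (r^2 * (2 * Pd s * Pf s) + 4 * ln 2 * pd s) / (2 * sqrt (Gf r s)).

Lemma Qf_der r s : 0 < s -> is_derive (Qf r) s (Qd r s).
Proof.
  intros Hs. unfold Qf, Gf.
  auto_derive.
  - repeat split.
    + exists (Pd s). apply Pf_der; lra.
    + exists (Pd s). apply Pf_der; lra.
    + exists (pd s). apply pf_der; lra.
    + generalize (Gf_pos r s Hs). unfold Gf. intro H. 
      replace (r * (r * 1) * (Pf s * (Pf s * 1)) + 4 * ln 2 * pf s) with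
        (r ^ 2 * Pf s ^ 2 + 4 * ln 2 * pf s) by ring. exact H.
  - replace (Derive (fun x => Pf x) s) with (Pd s)
      by (symmetry; apply is_derive_unique; apply Pf_der; lra).
    replace (Derive (fun x => pf x) s) with (pd s)
      by (symmetry; apply is_derive_unique; apply pf_der; lra).
    replace (r * (r * 1) * (Pf s * (Pf s * 1)) + 4 * ln 2 * pf s) with (Gf r s) by (unfold Gf; ring).
    unfold Qd.
    assert (0 < sqrt (Gf r s)) by (apply sqrt_lt_R0, Gf_pos; auto).
    field. lra.
Qed.

Lemma shapes s : 0 < s ->
  let y := exp s in let Y := sqrt (exp s + 1) in
  0 < Y /\ Y * Y = y + 1 /\ 1 + s < y /\
  Pf s = (y-1)*Y/(y*s) /\ pf s = (y-1)/s /\ pd s = (s*y - y + 1)/s^2 /\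
  Pd s = (s*(y^2+y+2) - 2*(y^2-1))*Y/(2*y*(y+1)*s^2).
Proof.
  intros Hs y Y.
  assert (Hy1 : 1 + s < y) by (apply exp_gt1; auto).
  assert (Hy : 0 < y) by lra.
  assert (HY : 0 < Y) by (apply sqrt_lt_R0; unfold y in Hy; lra).
  assert (HYY : Y * Y = y + 1) by (apply sqrt_sqrt; unfold y in Hy; lra).
  assert (Hz : exp (-s) = / y) by (unfold y; rewrite exp_Ropp; auto).
  assert (Hkf : kf s = (y-1)*Y/y).
  { unfold kf. fold Y y. rewrite Hz. field. lra. }
  assert (Hkd : kd s * (2*y*Y) = y^2+y+2).
  { unfold kd. fold Y y. rewrite Hz.
    replace ((/ y * Y + (1 - / y) * (y / (2 * Y))) * (2 * y * Y)) with (2*(Y*Y) + y*y - y)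
      by (field; lra).
    rewrite HYY. ring. }
  split; [auto|]. split; [auto|]. split; [auto|].
  split; [unfold Pf; rewrite Hkf; field; lra|].
  split; [unfold pf; fold y; reflexivity|].
  split; [unfold pd; fold y; field; lra|].
  unfold Pd. rewrite Hkf.
  assert (Hkd' : kd s = (y^2+y+2)/(2*y*Y)) by (rewrite <- Hkd; field; lra).
  rewrite Hkd'.
  transitivity ((s*(y^2+y+2) - 2*(y^2-1))/(2*y*Y*s^2)).
  - replace ((y-1)*Y/y*1) with ((y-1)*(y+1)/(y*Y)) by (rewrite <- HYY; field; lra).
    field. lra.
  - rewrite <- HYY. field. lra.
Qed.

Lemma ln2_pos : 0 < ln 2.
Proof. rewrite <- ln_1; apply ln_increasing; lra. Qed.

Lemma Qd_nonneg r s : 0 < s -> (r <= 0 \/ (0 < r /\ r^2 <= 3/5 * ln 2)) -> 0 <= Qd r s.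
Proof.
  intros Hs Hr.
  destruct (shapes s Hs) as [HY [HYY [Hy1 [HP [Hp [Hpd HPd]]]]]].
  assert (HE1 := E1 s). rewrite exp_Ropp in HE1.
  assert (HE4 := E4 s ltac:(lra)).
  assert (HJ := Jlem s ltac:(lra)).
  set (Y := sqrt (exp s + 1)) in *. set (y := exp s) in *.
  assert (Hl := ln2_pos). set (l := ln 2) in *.
  set (P := Pf s) in *. set (p := pf s) in *. set (d := Pd s) in *. set (e := pd s) in *.
  assert (HG : Gf r s = r^2 * P^2 + 4 * l * p) by reflexivity.
  assert (HS0 : 0 < sqrt (Gf r s)) by (apply sqrt_lt_R0, Gf_pos; auto).
  assert (HSS : sqrt (Gf r s) * sqrt (Gf r s) = r^2 * P^2 + 4 * l * p)
    by (rewrite <- HG; apply sqrt_sqrt; generalize (Gf_pos r s Hs); lra).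
  set (S := sqrt (Gf r s)) in *.
  assert (HQ : Qd r s = (r * d * (S + r * P) + 2 * l * e) / S).
  { unfold Qd. fold S P d e l. field. lra. }
  rewrite HQ. apply Rmult_le_pos; [| apply Rlt_le, Rinv_0_lt_compat; auto].
  assert (Hy : 0 < y) by lra.
  assert (Hsy : 0 <= s*y - y + 1).
  { assert (H1 := E1 s). rewrite exp_Ropp in H1. fold y in H1.
    assert (y * (1 - s) <= 1).
    { apply (Rmult_le_reg_r (/ y)). apply Rinv_0_lt_compat; auto.
      replace (y * (1 - s) * / y) with (1 - s) by (field; lra). lra. }
    lra. }
  assert (He : 0 <= e) by (rewrite Hpd; apply Rmult_le_pos; [lra| apply Rlt_le, Rinv_0_lt_compat; nra]).
  assert (HPpos : 0 < P) by (rewrite HP; apply Rdiv_lt_0_compat; nra).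
  assert (Hppos : 0 < p) by (rewrite Hp; apply Rdiv_lt_0_compat; nra).
  set (Nn := s*(y^2+y+2) - 2*(y^2-1)) in *.
  assert (HNdef : Nn = s*(y^2+y+2) - 2*(y^2-1)) by reflexivity.
  clearbody Nn S e d p P l Y y.
  assert (Hden : 0 < 2*y*(y+1)*s^2) by (apply Rmult_lt_0_compat; nra).
  assert (HSP : r * P <= S /\ - r * P <= S).
  { assert (0 <= S) by lra.
    assert ((r*P)^2 <= S^2) by nra.
    split; nra. }
  destruct Hr as [Hr | [Hr Hr2]].
  -
    destruct (Rle_lt_dec Nn 0) as [HN | HN].
    + assert (d <= 0).
      { assert (Nn * Y <= 0) by nra.
        assert (0 < / (2*y*(y+1)*s^2)) by (apply Rinv_0_lt_compat; auto).
        rewrite HPd; unfold Rdiv; nra. }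
      assert (0 <= r * d) by nra.
      assert (0 <= S + r * P) by lra.
      assert (0 <= r * d * (S + r*P)) by (apply Rmult_le_pos; auto).
      nra.
    + assert (Hd : 0 < d) by (rewrite HPd; apply Rdiv_lt_0_compat; nra).
      set (u := - r).
      assert (Hu : 0 <= u) by (unfold u; lra).
      assert (HSu : u * P <= S) by (unfold u; lra).
      assert (Hkey : P * e - p * d = (y-1)^2*(y+2)*Y/(2*y*(y+1)*s^2)).
      { rewrite HP, Hp, Hpd, HPd, HNdef. field. repeat split; lra. }
      assert (Hkey0 : 0 <= P * e - p * d).
      { rewrite Hkey. apply Rmult_le_pos; [| apply Rlt_le, Rinv_0_lt_compat; auto].
        apply Rmult_le_pos; [|lra]. apply Rmult_le_pos; nra. }
      assert (H1 : (S - u*P) * (S + u*P) = 4 * l * p) by (unfold u in *; nra).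
      assert (H2 : 2 * u * P * (S - u*P) <= 4 * l * p).
      { rewrite <- H1. assert (0 <= S - u*P) by lra.
        assert (2*u*P <= S + u*P) by lra.
        assert (H5 : 2*u*P*(S-u*P) <= (S+u*P)*(S-u*P)) by (apply Rmult_le_compat_r; lra).
        lra. }
      assert (H3 : u * d * (S - u*P) * P <= 2 * l * P * e).
      { assert (u * (S - u*P) * P <= 2 * l * p) by nra.
        assert (u * (S - u*P) * P * d <= 2 * l * p * d) by (apply Rmult_le_compat_r; lra).
        nra. }
      assert (H4 : u * d * (S - u*P) <= 2 * l * e).
      { apply (Rmult_le_reg_r P); auto. nra. }
      unfold u in H4. nra.
  -
    destruct (Rle_lt_dec 0 Nn) as [HN | HN].
    + assert (0 <= d) by (rewrite HPd; apply Rmult_le_pos; [apply Rmult_le_pos; lra| apply Rlt_le, Rinv_0_lt_compat; auto]).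
      assert (0 <= S + r * P) by nra.
      assert (0 <= r * d * (S + r*P)) by (apply Rmult_le_pos; [nra|auto]).
      nra.
    + assert (HPY : P <= Y).
      { rewrite HP. apply (Rmult_le_reg_r (y*s)); [nra|].
        replace ((y - 1) * Y / (y * s) * (y * s)) with ((y-1)*Y) by (field; lra).
        assert (H1 := HE1).
        assert (y - 1 <= y * s).
        { apply (Rmult_le_reg_r (/ y)). apply Rinv_0_lt_compat; auto.
          replace ((y-1) * / y) with (1 - / y) by (field; lra).
          replace (y * s * / y) with s by (field; lra). lra. }
        nra. }
      assert (HpY : p <= (y+1)/2).
      { rewrite Hp. apply (Rmult_le_reg_r s); auto.
        replace ((y-1)/s*s) with (y-1) by (field; lra).
        assert (H4 := HE4). nra. }
      assert (HrS : r * S <= 5/4 * l * Y).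
      { assert (Hsq : (r*S)^2 <= (5/4*l*Y)^2).
        { replace ((r*S)^2) with (r^2 * (S*S)) by ring. rewrite HSS.
          assert (P^2 <= Y^2) by nra.
          assert (r^2 * (r^2*P^2 + 4*l*p) <= 3/5*l * (3/5*l*Y^2 + 2*l*(Y*Y))).
          { apply Rmult_le_compat; try nra. }
          rewrite HYY in H0. nra. }
        assert (0 <= 5/4*l*Y) by nra. nra. }
      assert (Hr2P : r^2 * P <= 3/5 * l * Y) by (apply Rmult_le_compat; nra).
      assert (HrSP : r * (S + r*P) <= 37/20 * l * Y) by nra.
      assert (Hnd : 0 <= - d).
      { assert (Nn * Y <= 0) by nra.
        assert (0 < / (2*y*(y+1)*s^2)) by (apply Rinv_0_lt_compat; auto).
        rewrite HPd; unfold Rdiv; nra. }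
      assert (H5 : r * (- d) * (S + r*P) <= (- d) * (37/20 * l * Y)) by nra.
      assert (H6 : (- d) * Y = (- Nn) / (2*y*s^2)).
      { rewrite HPd.
        replace (- (Nn*Y/(2*y*(y+1)*s^2)) * Y) with (-Nn*(Y*Y)/(2*y*(y+1)*s^2)) by (field; lra).
        rewrite HYY. field. lra. }
      assert (HJ2 : 37/20 * (-Nn) <= 4*y*(s*y-y+1)) by (rewrite HNdef; lra).
      assert (H7 : (- d) * (37/20 * l * Y) <= 2 * l * e).
      { replace ((- d) * (37/20 * l * Y)) with (37/20 * l * ((-d)*Y)) by ring.
        rewrite H6, Hpd.
        apply (Rmult_le_reg_r (2*y*s^2)); [nra|].
        replace (37 / 20 * l * (- Nn / (2 * y * s ^ 2)) * (2 * y * s ^ 2)) with (l * (37/20 * (-Nn))) by (field; lra).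
        replace (2 * l * ((s * y - y + 1) / s ^ 2) * (2 * y * s ^ 2)) with (l * (4*y*(s*y-y+1))) by (field; lra).
        apply Rmult_le_compat_l; lra. }
      nra.
Qed.

Lemma Qmono r s1 s2 : (r <= 0 \/ (0 < r /\ r^2 <= 3/5 * ln 2)) -> 0 < s1 -> s1 <= s2 ->
  Qf r s1 <= Qf r s2.
Proof.
  intros Hr H1 H2.
  apply (mono_from (Qf r) (Qd r) s1); auto.
  - intros x Hx. apply Qf_der; lra.
  - intros x Hx. apply Qd_nonneg; auto; lra.
Qed.

Lemma rcond r : r <= 2 * sqrt (ln 2) / (4 - sqrt 2) -> (r <= 0 \/ (0 < r /\ r^2 <= 3/5 * ln 2)).
Proof.
  intros Hr. destruct (Rle_lt_dec r 0) as [H|H]; [left; auto| right; split; auto].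
  assert (Hl := ln2_pos).
  assert (H2 : sqrt 2 * sqrt 2 = 2) by (apply sqrt_sqrt; lra).
  assert (H2p : 0 < sqrt 2) by (apply sqrt_lt_R0; lra).
  assert (Hs2 : sqrt 2 < 14167/10000) by nra.
  assert (Hl2 : sqrt (ln 2) * sqrt (ln 2) = ln 2) by (apply sqrt_sqrt; lra).
  assert (Hlp : 0 <= sqrt (ln 2)) by apply sqrt_pos.
  assert (Hd : 0 < 4 - sqrt 2) by lra.
  assert (Hr' : r * (4 - sqrt 2) <= 2 * sqrt (ln 2)).
  { apply (Rmult_le_compat_r (4 - sqrt 2)) in Hr; [|lra].
    replace (2 * sqrt (ln 2) / (4 - sqrt 2) * (4 - sqrt 2)) with (2 * sqrt (ln 2)) in Hr by (field; lra).
    lra. }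
  assert (Hsq : (r * (4 - sqrt 2))^2 <= 4 * ln 2).
  { assert (E : (2 * sqrt (ln 2))^2 = 4 * ln 2).
    { transitivity (4 * (sqrt (ln 2) * sqrt (ln 2))); [ring| rewrite Hl2; ring]. }
    rewrite <- E. apply pow_incr. split; [nra| auto]. }
  assert (Hq : 20/3 <= (4 - sqrt 2)^2) by nra.
  assert (r^2 * (20/3) <= r^2 * (4 - sqrt 2)^2) by (apply Rmult_le_compat_l; nra).
  nra.
Qed.

Definition wf g := sqrt (1 - 1/(g+1)^2).

Lemma wf_arg_nonneg g : 0 <= g -> 0 <= 1 - 1/(g+1)^2.
Proof.
  intros Hg. assert (1 <= (g+1)^2) by nra.
  assert (1/(g+1)^2 <= 1).
  { apply (Rmult_le_reg_r ((g+1)^2)); [nra|]. replace (1/(g+1)^2 * (g+1)^2) with 1 by (field; nra). lra. }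
  lra.
Qed.

Lemma Ffun_l eps N m g : 0 < m -> 0 <= g ->
  Ffun eps N m g * ln 2 = Qinv eps * sqrt (1/m) * wf g - ln (1+g) + ln 2 * N * (1/m).
Proof.
  intros Hm Hg. unfold Ffun, log2, wf.
  rewrite sqrt_mult; [| apply Rlt_le, Rdiv_lt_0_compat; lra | apply wf_arg_nonneg; auto].
  assert (Hl := ln2_pos). field. lra.
Qed.

Lemma step_phi q w s lN a1 a2 : 0 < a2 -> a2 <= a1 -> 0 <= s -> 0 < lN ->
  q * a1 * w - s + lN * a1^2 = 0 -> q * a2 * w - s + lN * a2^2 <= 0.
Proof.
  intros H2 H12 Hs Hl Heq.
  assert (Hid : a1 * (q * a2 * w - s + lN * a2^2) = (a2 - a1) * (lN * a1 * a2 + s) + a2 * (q * a1 * w - s + lN * a1^2)) by ring.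
  rewrite Heq in Hid.
  assert (0 <= lN * a1 * a2 + s) by (assert (0 < lN*a1*a2) by (apply Rmult_lt_0_compat; nra); lra).
  assert (Hn : (a2 - a1) * (lN * a1 * a2 + s) <= 0) by nra.
  rewrite Rmult_0_r, Rplus_0_r in Hid. rewrite <- Hid in Hn.
  destruct (Rle_lt_dec (q * a2 * w - s + lN * a2^2) 0); auto. nra.
Qed.

Lemma ln1p_pos g : 0 < g -> 0 < ln (1+g).
Proof. intros; rewrite <- ln_1; apply ln_increasing; lra. Qed.

Lemma exp_m2ln y : 0 < y -> exp (-2 * ln y) = 1 / y^2.
Proof.
  intros Hy. replace (-2 * ln y) with (- (ln y + ln y)) by ring.
  rewrite exp_Ropp, exp_plus, exp_ln by auto. field. lra.
Qed.

Lemma Wlem g1 g2 : 0 < g1 -> g1 <= g2 -> wf g2 * ln (1+g1) <= wf g1 * ln (1+g2).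
Proof.
  intros H1 H12.
  assert (Hs1 := ln1p_pos g1 H1). assert (Hs2 := ln1p_pos g2 ltac:(lra)).
  assert (Hs12 : ln (1+g1) <= ln (1+g2)).
  { destruct (Req_dec g1 g2) as [->|]; [lra|]. apply Rlt_le, ln_increasing; lra. }
  assert (H5 := E5 (ln (1+g1)) (ln (1+g2)) Hs1 Hs12).
  rewrite !exp_m2ln in H5 by lra.
  assert (Hu1 : wf g1 * wf g1 = 1 - 1/(g1+1)^2) by (apply sqrt_sqrt, wf_arg_nonneg; lra).
  assert (Hu2 : wf g2 * wf g2 = 1 - 1/(g2+1)^2) by (apply sqrt_sqrt, wf_arg_nonneg; lra).
  replace (1 + g1) with (g1 + 1) in * by ring. replace (1 + g2) with (g2 + 1) in * by ring.
  set (s1 := ln (g1+1)) in *. set (s2 := ln (g2+1)) in *.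
  set (u1 := 1 - 1/(g1+1)^2) in *. set (u2 := 1 - 1/(g2+1)^2) in *.
  assert (Hu : u2 * s1 <= u1 * s2).
  { apply (Rmult_le_compat_r (s1 * s2)) in H5; [|nra].
    replace (u2 / s2 * (s1 * s2)) with (u2 * s1) in H5 by (field; lra).
    replace (u1 / s1 * (s1 * s2)) with (u1 * s2) in H5 by (field; lra). auto. }
  assert (0 <= wf g1) by apply sqrt_pos. assert (0 <= wf g2) by apply sqrt_pos.
  assert (Hsq : (wf g2 * s1)^2 <= (wf g1 * s2)^2).
  { replace ((wf g2 * s1)^2) with ((wf g2 * wf g2) * s1 * s1) by ring.
    replace ((wf g1 * s2)^2) with ((wf g1 * wf g1) * s2 * s2) by ring.
    rewrite Hu1, Hu2. fold u1 u2.
    assert (0 <= u1) by (rewrite <- Hu1; nra).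
    assert (u2 * s1 * s1 <= u1 * s2 * s1) by (apply Rmult_le_compat_r; lra).
    assert (u1 * s2 * s1 <= u1 * s2 * s2) by (apply Rmult_le_compat_l; nra).
    lra. }
  destruct (Rle_lt_dec (wf g2 * s1) (wf g1 * s2)); auto.
  assert (0 <= wf g1 * s2) by nra. nra.
Qed.

Lemma wf_mono g1 g2 : 0 <= g1 -> g1 <= g2 -> wf g1 <= wf g2.
Proof.
  intros H1 H2. unfold wf. apply sqrt_le_1; try (apply wf_arg_nonneg; lra).
  assert (1/(g2+1)^2 <= 1/(g1+1)^2).
  { apply Rmult_le_reg_r with ((g1+1)^2 * (g2+1)^2); [nra|].
    replace (1/(g2+1)^2 * ((g1+1)^2 * (g2+1)^2)) with ((g1+1)^2) by (field; nra).
    replace (1/(g1+1)^2 * ((g1+1)^2 * (g2+1)^2)) with ((g2+1)^2) by (field; nra).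
    nra. }
  lra.
Qed.

Lemma sqrt_inv_sq m : 0 < m -> sqrt (1/m) ^ 2 = 1/m.
Proof. intros. apply pow2_sqrt. apply Rlt_le, Rdiv_lt_0_compat; lra. Qed.

Lemma part_i eps Nk m g D ga : 0 < Nk -> 0 < m -> m <= D -> 0 < g -> 0 < ga ->
  Ffun eps Nk m g = 0 -> Ffun eps Nk D ga = 0 -> ga <= g.
Proof.
  intros HN Hm HmD Hg Hga F1 F2.
  assert (Hl := ln2_pos).
  assert (E1 := Ffun_l eps Nk m g Hm ltac:(lra)). rewrite F1, Rmult_0_l in E1.
  assert (E2 := Ffun_l eps Nk D ga ltac:(lra) ltac:(lra)). rewrite F2, Rmult_0_l in E2.
  set (q := Qinv eps) in *. set (a1 := sqrt (1/m)) in *. set (a2 := sqrt (1/D)) in *.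
  assert (Ha1s : a1^2 = 1/m) by (apply sqrt_inv_sq; lra).
  assert (Ha2s : a2^2 = 1/D) by (apply sqrt_inv_sq; lra).
  rewrite <- Ha1s in E1. rewrite <- Ha2s in E2.
  assert (Ha2 : 0 < a2) by (apply sqrt_lt_R0, Rdiv_lt_0_compat; lra).
  assert (Ha12 : a2 <= a1).
  { apply sqrt_le_1; try (apply Rlt_le, Rdiv_lt_0_compat; lra).
    apply Rmult_le_reg_r with (m*D); [nra|].
    replace (1/D*(m*D)) with m by (field; lra). replace (1/m*(m*D)) with D by (field; lra). lra. }
  assert (Hs1 := ln1p_pos g Hg). assert (Hs2 := ln1p_pos ga Hga).
  assert (Hst : q * a2 * wf g - ln (1+g) + (ln 2 * Nk) * a2^2 <= 0).
  { apply (step_phi q (wf g) (ln (1+g)) (ln 2 * Nk) a1 a2); try lra; apply Rmult_lt_0_compat; lra. }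
  destruct (Rle_lt_dec ga g) as [H|H]; auto. exfalso.
  assert (Hs12 : ln (1+g) < ln (1+ga)) by (apply ln_increasing; lra).
  assert (Hw : wf g <= wf ga) by (apply wf_mono; lra).
  assert (0 <= wf g) by apply sqrt_pos.
  set (s1 := ln (1+g)) in *. set (s2 := ln (1+ga)) in *.
  set (w1 := wf g) in *. set (w2 := wf ga) in *.
  assert (HlN : 0 < ln 2 * Nk * a2^2) by (apply Rmult_lt_0_compat; [nra| nra]).
  destruct (Rle_lt_dec q 0) as [Hq|Hq].
  - assert (q * a2 * (w2 - w1) <= 0).
    { assert (0 <= a2 * (w2 - w1)) by nra. nra. }
    nra.
  - assert (HW := Wlem g ga Hg ltac:(lra)). fold w1 w2 s1 s2 in HW.
    assert (A1 : s1 * s2 >= ln 2 * Nk * a2^2 * s2 + q * a2 * w1 * s2) by nra.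
    assert (A2 : q * a2 * w1 * s2 >= q * a2 * w2 * s1).
    { assert (0 < q * a2) by nra. nra. }
    assert (A3 : q * a2 * w2 = s2 - ln 2 * Nk * a2^2) by lra.
    assert (A4 : 0 >= ln 2 * Nk * a2^2 * (s2 - s1)) by nra.
    nra.
Qed.

Lemma Ps_eq g : 0 < g -> Pf (ln (1+g)) * ln (1+g) = wf g * sqrt g.
Proof.
  intros Hg. assert (Hs := ln1p_pos g Hg).
  assert (He : exp (ln (1+g)) = 1+g) by (apply exp_ln; lra).
  unfold Pf. replace (kf (ln (1+g)) / ln (1+g) * ln (1+g)) with (kf (ln (1+g))) by (field; lra).
  unfold kf. rewrite exp_Ropp, He.
  unfold wf. rewrite <- sqrt_mult; [| apply wf_arg_nonneg; lra | lra].
  assert (HZ : sqrt (1+g+1) ^ 2 = 1+g+1) by (apply pow2_sqrt; lra).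
  assert (Hpos : 0 <= (1 - / (1+g)) * sqrt (1+g+1)).
  { apply Rmult_le_pos; [| apply sqrt_pos].
    assert (/ (1+g) <= 1).
    { rewrite <- Rinv_1. apply Rinv_le_contravar; lra. }
    lra. }
  rewrite <- (sqrt_pow2 _ Hpos). f_equal.
  rewrite Rpow_mult_distr, HZ. field. lra.
Qed.

Lemma ps_eq g : 0 < g -> pf (ln (1+g)) * ln (1+g) = g.
Proof.
  intros Hg. assert (Hs := ln1p_pos g Hg).
  unfold pf. rewrite exp_ln by lra. field. lra.
Qed.

Lemma energy eps Nk m g : 0 < Nk -> 0 < m -> 0 < g -> Ffun eps Nk m g = 0 ->
  0 < Qf (Qinv eps / sqrt Nk) (ln (1+g)) /\
  m * g = Nk * (Qf (Qinv eps / sqrt Nk) (ln (1+g)))^2 / 4.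
Proof.
  intros HN Hm Hg F1.
  assert (Hl := ln2_pos).
  assert (E1 := Ffun_l eps Nk m g Hm ltac:(lra)). rewrite F1, Rmult_0_l in E1.
  assert (HPs := Ps_eq g Hg). assert (Hps := ps_eq g Hg).
  assert (Hs := ln1p_pos g Hg).
  assert (HsN : 0 < sqrt Nk) by (apply sqrt_lt_R0; lra).
  assert (HNN : sqrt Nk * sqrt Nk = Nk) by (apply sqrt_sqrt; lra).
  assert (HGG : sqrt g * sqrt g = g) by (apply sqrt_sqrt; lra).
  assert (HG : 0 < sqrt g) by (apply sqrt_lt_R0; lra).
  set (q := Qinv eps) in *. set (a := sqrt (1/m)) in *.
  assert (Has : a^2 = 1/m) by (apply sqrt_inv_sq; lra).
  rewrite <- Has in E1.
  assert (Ha : 0 < a) by (apply sqrt_lt_R0, Rdiv_lt_0_compat; lra).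
  set (r := q / sqrt Nk).
  assert (Hq : q = r * sqrt Nk) by (unfold r; field; lra).
  set (s := ln (1+g)) in *. set (w := wf g) in *. set (G := sqrt g) in *.
  set (P := Pf s) in *. set (p := pf s) in *.
  set (x := a * sqrt Nk).
  assert (Hx : 0 < x) by (unfold x; nra).
  assert (Heq : ln 2 * x^2 + r * w * x = s).
  { unfold x. rewrite Hq in E1.
    replace (ln 2 * (a * sqrt Nk)^2) with (ln 2 * (sqrt Nk * sqrt Nk) * a^2) by ring.
    rewrite HNN. lra. }
  set (R := G / x).
  assert (HRx : R * x = G) by (unfold R; field; lra).
  assert (HR : 0 < R) by (unfold R; apply Rdiv_lt_0_compat; lra).
  assert (Hkey : (R^2 - r*P*R - ln 2 * p) * (s * x^2) = 0).
  { replace ((R^2 - r*P*R - ln 2 * p) * (s * x^2)) with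
      ((R*x)^2 * s - r*(P*s)*(R*x)*x - ln 2*(p*s)*x^2) by ring.
    rewrite HRx, HPs, Hps.
    replace (G^2 * s - r * (w * G) * G * x - ln 2 * g * x^2) with
      ((G*G) * (s - r*w*x) - ln 2 * g * x^2) by ring.
    rewrite HGG. rewrite <- Heq. ring. }
  assert (HR2 : R^2 = r*P*R + ln 2 * p).
  { assert (0 < s * x^2) by (apply Rmult_lt_0_compat; nra).
    apply Rmult_integral in Hkey. destruct Hkey as [K1|K1]; lra. }
  assert (Hp : 0 < p) by (apply pf_pos; auto).
  assert (H2R : 0 <= 2*R - r*P).
  { assert (R * (2*R - r*P) = R^2 + ln 2 * p) by nra.
    assert (0 < R^2 + ln 2 * p) by nra.
    destruct (Rle_lt_dec 0 (2*R - r*P)); auto. nra. }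
  assert (HQ : Qf r s = 2 * R).
  { unfold Qf, Gf. fold P p.
    replace (r^2 * P^2 + 4 * ln 2 * p) with ((2*R - r*P)^2) by nra.
    rewrite sqrt_pow2 by auto. ring. }
  rewrite HQ. split; [lra|].
  assert (HR2' : R^2 * (a^2 * Nk) = g).
  { replace (R^2 * (a^2*Nk)) with ((R * (a * sqrt Nk))^2)
      by (transitivity (R^2 * a^2 * (sqrt Nk * sqrt Nk)); [ring | rewrite HNN; ring]).
    fold x. rewrite HRx. rewrite <- HGG. ring. }
  rewrite Has in HR2'.
  replace (Nk * (2*R)^2/4) with (R^2 * Nk) by field.
  apply (Rmult_eq_reg_r (1/m)); [| apply Rgt_not_eq, Rdiv_lt_0_compat; lra].
  replace (m * g * (1/m)) with g by (field; lra).
  rewrite <- HR2'. ring.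
Qed.

Lemma cont_plus_R (f g : R -> R) x : continuous f x -> continuous g x -> continuous (fun t => f t + g t) x.
Proof. intros; apply (continuous_plus f g x); auto. Qed.
Lemma cont_mult_R (f g : R -> R) x : continuous f x -> continuous g x -> continuous (fun t => f t * g t) x.
Proof. intros; apply (continuous_mult f g x); auto. Qed.

Lemma derive_cont (f : R -> R) x : ex_derive f x -> continuous f x.
Proof. intros H. apply (ex_derive_continuous (K:=R_AbsRing) (V:=R_NormedModule)). auto. Qed.

Lemma Ffun_cont eps Nk D x : 0 < D -> 0 <= x -> continuity_pt (fun t => - Ffun eps Nk D t) x.
Proof.
  intros HD Hx. apply continuity_pt_filterlim.
  change (continuous (fun t => - Ffun eps Nk D t) x).
  apply (continuous_ext (fun t => (-1) * (sqrt ((1/D) * (1 - 1/(t+1)^2)) * (Qinv eps / ln 2))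
                                 + (ln (1+t) / ln 2 - Nk / D))).
  { intros t. cbv beta. change ((-1) * (sqrt ((1/D) * (1 - 1/(t+1)^2)) * (Qinv eps / ln 2)) + (ln (1+t) / ln 2 - Nk / D) = - Ffun eps Nk D t). unfold Ffun, log2. ring. }
  apply cont_plus_R.
  - apply cont_mult_R; [apply continuous_const|].
    apply cont_mult_R; [|apply continuous_const].
    apply continuous_sqrt_comp. apply derive_cont. auto_derive. nra.
  - apply derive_cont. auto_derive. lra.
Qed.

Lemma Ffun_at0 eps Nk D : 0 < D -> Ffun eps Nk D 0 = Nk / D.
Proof.
  intros HD. unfold Ffun, log2.
  replace (1 - 1 / (0 + 1) ^ 2) with 0 by field.
  rewrite Rmult_0_r, sqrt_0. replace (1+0) with 1 by ring. rewrite ln_1.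
  assert (Hl := ln2_pos). field. split; lra.
Qed.

Lemma user_exists eps Nk m g D : 0 < Nk -> 0 < m -> m <= D -> 0 <= g ->
  Ffun eps Nk m g = 0 -> 0 < g /\ exists ga, 0 < ga /\ Ffun eps Nk D ga = 0.
Proof.
  intros HN Hm HmD Hg0 F1.
  assert (Hl := ln2_pos).
  assert (Hg : 0 < g).
  { destruct (Req_dec g 0) as [->|]; [|lra].
    rewrite Ffun_at0 in F1 by lra. exfalso.
    assert (0 < Nk / m) by (apply Rdiv_lt_0_compat; lra). lra. }
  split; auto.
  assert (E1 := Ffun_l eps Nk m g Hm ltac:(lra)). rewrite F1, Rmult_0_l in E1.
  assert (E2 := Ffun_l eps Nk D g ltac:(lra) ltac:(lra)).
  set (q := Qinv eps) in *. set (a1 := sqrt (1/m)) in *. set (a2 := sqrt (1/D)) in *.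
  assert (Ha1s : a1^2 = 1/m) by (apply sqrt_inv_sq; lra).
  assert (Ha2s : a2^2 = 1/D) by (apply sqrt_inv_sq; lra).
  rewrite <- Ha1s in E1. rewrite <- Ha2s in E2.
  assert (Ha2 : 0 < a2) by (apply sqrt_lt_R0, Rdiv_lt_0_compat; lra).
  assert (Ha12 : a2 <= a1).
  { apply sqrt_le_1; try (apply Rlt_le, Rdiv_lt_0_compat; lra).
    apply Rmult_le_reg_r with (m*D); [nra|].
    replace (1/D*(m*D)) with m by (field; lra). replace (1/m*(m*D)) with D by (field; lra). lra. }
  assert (Hs1 := ln1p_pos g Hg).
  assert (Hst : q * a2 * wf g - ln (1+g) + (ln 2 * Nk) * a2^2 <= 0).
  { apply (step_phi q (wf g) (ln (1+g)) (ln 2 * Nk) a1 a2); try lra; apply Rmult_lt_0_compat; lra. }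
  assert (Hfg : Ffun eps Nk D g <= 0).
  { assert (Ffun eps Nk D g * ln 2 <= 0) by lra.
    destruct (Rle_lt_dec (Ffun eps Nk D g) 0); auto. nra. }
  destruct (Req_dec (Ffun eps Nk D g) 0) as [Hz|Hz].
  - exists g. split; auto.
  - destruct (Ranalysis5.IVT_interv (fun t => - Ffun eps Nk D t) 0 g) as [z [Hz1 Hz2]].
    + intros t Ht. apply Ffun_cont; lra.
    + auto.
    + rewrite Ffun_at0 by lra. assert (0 < Nk / D) by (apply Rdiv_lt_0_compat; lra). lra.
    + lra.
    + exists z. split; [|lra].
      destruct (Req_dec z 0) as [->|]; [|lra].
      rewrite Ffun_at0 in Hz2 by lra. assert (0 < Nk / D) by (apply Rdiv_lt_0_compat; lra). lra.
Qed.

Lemma user_main eps Nk m g D ga : 0 < Nk ->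
  Qinv eps / sqrt Nk <= 2 * sqrt (ln 2) / (4 - sqrt 2) ->
  0 < m -> m <= D -> 0 < g -> 0 < ga ->
  Ffun eps Nk m g = 0 -> Ffun eps Nk D ga = 0 -> ga <= g /\ D * ga <= m * g.
Proof.
  intros HN Hc Hm HmD Hg Hga F1 F2.
  assert (Hle := part_i eps Nk m g D ga HN Hm HmD Hg Hga F1 F2).
  split; auto.
  destruct (energy eps Nk m g HN Hm Hg F1) as [HQ1 HE1].
  destruct (energy eps Nk D ga HN ltac:(lra) Hga F2) as [HQ2 HE2].
  assert (HQ : Qf (Qinv eps / sqrt Nk) (ln (1+ga)) <= Qf (Qinv eps / sqrt Nk) (ln (1+g))).
  { apply Qmono. apply rcond; auto. apply ln1p_pos; auto.
    destruct (Req_dec ga g) as [->|]; [lra|]. apply Rlt_le, ln_increasing; lra. }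
  rewrite HE1, HE2.
  set (Q1 := Qf (Qinv eps / sqrt Nk) (ln (1+g))) in *.
  set (Q2 := Qf (Qinv eps / sqrt Nk) (ln (1+ga))) in *.
  assert (Q2^2 <= Q1^2) by nra.
  assert (Nk * Q2^2 <= Nk * Q1^2) by (apply Rmult_le_compat_l; lra).
  lra.
Qed.

Lemma Gamma_spec eps Nk m g D : 0 < Nk -> 0 < m -> m <= D -> 0 <= g -> Ffun eps Nk m g = 0 ->
  0 < g /\ 0 < Gamma eps Nk D /\ Ffun eps Nk D (Gamma eps Nk D) = 0.
Proof.
  intros HN Hm HmD Hg F1.
  destruct (user_exists eps Nk m g D HN Hm HmD Hg F1) as [Hg' Hex].
  split; auto.
  unfold Gamma. apply (epsilon_spec (inhabits 0) (fun g => 0 < g /\ Ffun eps Nk D g = 0)). auto.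
Qed.

Theorem corollary2 (h1 h2 : C) (D1 D2 mhat Pmax N1 N2 eps1 eps2 : R) :
  h1 <> 0%C -> h2 <> 0%C -> Cmod h1 > Cmod h2 ->
  D1 < D2 -> 0 < mhat -> 0 < Pmax -> 0 < N1 -> 0 < N2 ->
  0 < eps1 < 1 -> 0 < eps2 < 1 ->
  Qinv eps1 / sqrt N1 <= 2 * sqrt (ln 2) / (4 - sqrt 2) ->
  Qinv eps2 / sqrt N2 <= 2 * sqrt (ln 2) / (4 - sqrt 2) ->
  (exists m1 m2 p1 p2 g1 g2,
      feasible h1 h2 mhat Pmax D1 N1 N2 eps1 eps2 m1 m2 p1 p2 g1 g2) ->
  let g1s := Gamma eps1 N1 D1 in
  let g2s := Gamma eps2 N2 D1 in
  let p1s := g1s / Cmod h1 ^ 2 in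
  let p2s := g1s * g2s / Cmod h1 ^ 2 + g2s / Cmod h2 ^ 2 in
  feasible h1 h2 mhat Pmax D1 N1 N2 eps1 eps2 D1 D1 p1s p2s g1s g2s /\
  (forall m1 m2 p1 p2 g1 g2,
      feasible h1 h2 mhat Pmax D1 N1 N2 eps1 eps2 m1 m2 p1 p2 g1 g2 ->
      D1 * p1s + D1 * p2s <= m1 * p1 + m2 * p2).
Proof.
  intros Hh1 Hh2 Hh12 HD12 Hmhat HPmax HN1 HN2 He1 He2 Hc1 Hc2 Hfeas g1s g2s p1s p2s.
  assert (HH1 : 0 < Cmod h1 ^ 2) by (apply pow_lt, Cmod_gt_0; auto).
  assert (HH2 : 0 < Cmod h2 ^ 2) by (apply pow_lt, Cmod_gt_0; auto).
  set (H1 := Cmod h1 ^ 2) in *. set (H2 := Cmod h2 ^ 2) in *.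
  assert (Gen : forall m1 m2 p1 p2 g1 g2,
      feasible h1 h2 mhat Pmax D1 N1 N2 eps1 eps2 m1 m2 p1 p2 g1 g2 ->
      0 < g1s /\ Ffun eps1 N1 D1 g1s = 0 /\ 0 < g2s /\ Ffun eps2 N2 D1 g2s = 0 /\
      g1s <= g1 /\ D1 * g1s <= m1 * g1 /\ g2s <= g2 /\ D1 * g2s <= m2 * g2 /\
      p1 = g1 / H1 /\ p2 = g2 * p1 + g2 / H2 /\ 0 <= p1 /\ 0 <= p2 /\ p1 + p2 <= Pmax /\
      mhat <= D1).
  { intros m1 m2 p1 p2 g1 g2 Hf.
    destruct Hf as [F1 [F2 [Hm1 [Hm2 [Hp1 [Hp2 [HP [HmD [Hm21 [Hg1 Hg2]]]]]]]]]].
    fold H1 H2 in Hg1, Hg2.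
    assert (Hg1p : 0 <= g1) by (rewrite Hg1; nra).
    assert (Hden : 0 < p1 * H2 + 1) by nra.
    assert (Hg2p : 0 <= g2) by (rewrite Hg2; apply Rmult_le_pos; [nra| apply Rlt_le, Rinv_0_lt_compat; auto]).
    destruct (Gamma_spec eps1 N1 m1 g1 D1 HN1 ltac:(lra) HmD Hg1p F1) as [Hg1' [HG1 FG1]].
    destruct (Gamma_spec eps2 N2 m2 g2 D1 HN2 ltac:(lra) ltac:(lra) Hg2p F2) as [Hg2' [HG2 FG2]].
    destruct (user_main eps1 N1 m1 g1 D1 g1s HN1 Hc1 ltac:(lra) HmD Hg1' HG1 F1 FG1) as [U1 V1].
    destruct (user_main eps2 N2 m2 g2 D1 g2s HN2 Hc2 ltac:(lra) ltac:(lra) Hg2' HG2 F2 FG2) as [U2 V2].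
    repeat split; auto; try lra.
    - rewrite Hg1. field. lra.
    - rewrite Hg2. field. split; lra. }
  destruct Hfeas as (m1 & m2 & p1 & p2 & g1 & g2 & Hf).
  destruct (Gen m1 m2 p1 p2 g1 g2 Hf) as [HG1 [FG1 [HG2 [FG2 [U1 [V1 [U2 [V2 [Ep1 [Ep2 [Hp1 [Hp2 [HP Hmh]]]]]]]]]]]]].
  assert (Hp1s : p1s <= p1).
  { unfold p1s. rewrite Ep1. fold H1. apply Rmult_le_compat_r; [apply Rlt_le, Rinv_0_lt_compat; auto| auto]. }
  assert (Hp1s0 : 0 <= p1s) by (unfold p1s; apply Rmult_le_pos; [lra| apply Rlt_le, Rinv_0_lt_compat; auto]).
  assert (Hp2s : p2s = g2s * p1s + g2s / H2) by (unfold p2s, p1s; fold H1 H2; field; lra).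
  split.
  - unfold feasible. repeat split; auto; try lra.
    + rewrite Hp2s. assert (0 <= g2s / H2) by (apply Rmult_le_pos; [lra| apply Rlt_le, Rinv_0_lt_compat; auto]).
      assert (0 <= g2s * p1s) by (apply Rmult_le_pos; lra). lra.
    + assert (g2s * p1s <= g2 * p1) by (apply Rmult_le_compat; lra).
      assert (g2s / H2 <= g2 / H2) by (apply Rmult_le_compat_r; [apply Rlt_le, Rinv_0_lt_compat; auto| auto]).
      lra.
    + unfold p1s. fold H1. field. lra.
    + fold H2. rewrite Hp2s. unfold p1s. fold H1.
      assert (0 < g1s * H2) by (apply Rmult_lt_0_compat; lra).
      assert (0 < g1s / H1 * H2 + 1).
      { assert (0 <= g1s / H1 * H2) by (apply Rmult_le_pos; [apply Rmult_le_pos; [lra| apply Rlt_le, Rinv_0_lt_compat; auto]|lra]). lra. }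
      field. repeat split; try lra.
  - intros m1' m2' p1' p2' g1' g2' Hf'.
    destruct (Gen m1' m2' p1' p2' g1' g2' Hf') as [_ [_ [_ [_ [U1' [V1' [U2' [V2' [Ep1' [Ep2' [Hp1' [Hp2' [HP' Hmh']]]]]]]]]]]]].
    destruct Hf' as [_ [_ [Hm1' [Hm2' _]]]].
    assert (Hp1s' : p1s <= p1').
    { unfold p1s. rewrite Ep1'. fold H1. apply Rmult_le_compat_r; [apply Rlt_le, Rinv_0_lt_compat; auto| auto]. }
    assert (A1 : D1 * p1s <= m1' * p1').
    { rewrite Ep1'. unfold p1s. fold H1.
      replace (D1 * (g1s / H1)) with ((D1 * g1s) / H1) by (field; lra).
      replace (m1' * (g1' / H1)) with ((m1' * g1') / H1) by (field; lra).
      apply Rmult_le_compat_r; [apply Rlt_le, Rinv_0_lt_compat; auto| auto]. }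
    assert (A2 : D1 * p2s <= m2' * p2').
    { rewrite Hp2s, Ep2'.
      replace (D1 * (g2s * p1s + g2s / H2)) with ((D1 * g2s) * p1s + (D1 * g2s) / H2) by (field; lra).
      replace (m2' * (g2' * p1' + g2' / H2)) with ((m2' * g2') * p1' + (m2' * g2') / H2) by (field; lra).
      assert (0 <= D1 * g2s) by (apply Rmult_le_pos; lra).
      assert ((D1 * g2s) * p1s <= (m2' * g2') * p1') by (apply Rmult_le_compat; lra).
      assert ((D1 * g2s) / H2 <= (m2' * g2') / H2) by (apply Rmult_le_compat_r; [apply Rlt_le, Rinv_0_lt_compat; auto| auto]).
      lra. }
    lra.
Qed.
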